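(* For every instance $(A,C,k)$, every committee $W$ that the Method of Equal Shares (MES) can output (under any tie-breaking), and every AV-completion $\overline{W}$ of $W$, the utilitarian ratio of $\overline{W}$ is at least $\frac{2}{\sqrt{k}}-\frac2k$.
   Context: An instance $(A,C,k)$ consists of a finite nonempty candidate set $C$, voters $N=\{1,\dots,n\}$, approval sets $A_i\subseteq C$, and a committee size $1\le k\le|C|$. $N_c=\{i: c\in A_i\}$. $\mathrm{sw}(W)=\sum_i|A_i\cap W|$; the utilitarian ratio of $W$ is $\mathrm{sw}(W)/\max\{\mathrm{sw}(W'):|W'|=k\}$. MES starts with $W=\emptyset$ and budgets $b_i=k/n$ for all $i\in N$. In each round, for each $c\in C\setminus W$ it determines the value $\rho\ge0$ (if any) with $\sum_{i\in N_c}\min(b_i,\rho)=1$; if no unselected candidate has such a $\rho$, MES terminates and outputs $W$; otherwise it adds a candidate $c$ with minimum $\rho$ (ties arbitrary) to $W$ and sets $b_i\leftarrow b_i-\min(b_i,\rho)$ for each $i\in N_c$. An AV-completion of $W$ is $W\cup T$ with $T\subseteq C\setminus W$, $|T|=k-|W|$, maximizing $\sum_{c\in T}|N_c|$. *)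

(* Defs.v *)
From HB Require Import structures.
From mathcomp Require Import all_boot all_order all_algebra.
Set Implicit Arguments. Unset Strict Implicit. Unset Printing Implicit Defensive.
Import Order.TTheory GRing.Theory Num.Theory.
Local Open Scope ring_scope.

Section MES.
Variables (R : rcfType) (C : finType) (n : nat) (A : 'I_n -> {set C}) (k : nat).

Definition supporters (c : C) : {set 'I_n} := [set i | c \in A i].

Definition sw (W : {set C}) : nat := (\sum_(i < n) #|A i :&: W|)%N.

Definition opt_sw : nat := (\max_(W' : {set C} | #|W'| == k) sw W')%N.

Definition util_ratio (W : {set C}) : R := (sw W)%:R / (opt_sw)%:R.

Definition rho_ok (b : 'I_n -> R) (c : C) (rho : R) : Prop :=
  0 <= rho /\ \sum_(i in supporters c) Num.min (b i) rho = 1.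

Definition mes_choice (W : {set C}) (b : 'I_n -> R) (c : C) (rho : R) : Prop :=
  c \notin W /\ rho_ok b c rho /\
  (forall c' rho', c' \notin W -> rho_ok b c' rho' -> rho <= rho').

Definition mes_pay (b : 'I_n -> R) (c : C) (rho : R) : 'I_n -> R :=
  fun i => if c \in A i then b i - Num.min (b i) rho else b i.

Inductive mes_reach : {set C} -> ('I_n -> R) -> Prop :=
| mes_init : mes_reach set0 (fun _ => k%:R / n%:R)
| mes_step W b c rho :
    mes_reach W b -> mes_choice W b c rho ->
    mes_reach (c |: W) (mes_pay b c rho).

Definition mes_output (W : {set C}) : Prop :=
  exists b, mes_reach W b /\
    (forall c, c \notin W -> forall rho, ~ rho_ok b c rho).

Definition av_completion (W Wbar : {set C}) : Prop :=
  exists T : {set C},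
    [/\ T \subset ~: W, #|T| = (k - #|W|)%N,
        (forall T' : {set C}, T' \subset ~: W -> #|T'| = (k - #|W|)%N ->
           (\sum_(c in T') #|supporters c| <= \sum_(c in T) #|supporters c|)%N)
      & Wbar = W :|: T].

End MES.

(* Main.v *)
Require Import Defs.
From HB Require Import structures.
From mathcomp Require Import all_boot all_order all_algebra.
From mathcomp Require Import ring lra zify.
From Stdlib Require Import Lia.
Set Implicit Arguments. Unset Strict Implicit. Unset Printing Implicit Defensive.
Import Order.TTheory GRing.Theory Num.Theory.
Local Open Scope ring_scope.

Lemma sw_sum (C : finType) (n : nat) (A : 'I_n -> {set C}) (W : {set C}) :
  sw A W = (\sum_(c in W) #|supporters A c|)%N.
Proof.
rewrite /sw.
have E : forall i, #|A i :&: W| = (\sum_(c in W) (c \in A i))%N.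
  move=> i; rewrite -sum1_card (big_mkcond (fun c => c \in A i :&: W)) /=.
  rewrite [RHS](big_mkcond (fun c => c \in W)) /=.
  apply: eq_bigr => c _; rewrite inE; by case: (c \in A i); case: (c \in W).
rewrite (eq_bigr (fun i => \sum_(c in W) ((c \in A i) : nat))%N); last first.
  move=> i _. exact: E.
rewrite exchange_big /=; apply: eq_bigr => c _.
rewrite -sum1_card /supporters (big_mkcond (fun i => i \in [set i0 | c \in A i0])) /=.
apply: eq_bigr => i _; rewrite inE.
by case: (c \in A i).
Qed.

Lemma min_addr (R : realDomainType) (a b d : R) : 0 <= d ->
  Num.min a (b + d) <= Num.min a b + d.
Proof. by move=> hd; case: (lerP a (b + d)); case: (lerP a b) => *; lra. Qed.

Lemma min_le1 (R : realDomainType) (a b : R) : Num.min a b <= a.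
Proof. by case: (lerP a b) => *; lra. Qed.

Lemma min_le2 (R : realDomainType) (a b : R) : Num.min a b <= b.
Proof. by case: (lerP a b) => *; lra. Qed.

Lemma min_ge (R : realDomainType) (a b c : R) : c <= a -> c <= b -> c <= Num.min a b.
Proof. by case: (lerP a b) => *; lra. Qed.

Lemma min_mono (R : realDomainType) (a b b' : R) : b <= b' -> Num.min a b <= Num.min a b'.
Proof. by case: (lerP a b); case: (lerP a b') => *; lra. Qed.

Section MESProof.
Variables (R : rcfType) (C : finType) (n : nat) (A : 'I_n -> {set C}) (k : nat).
Variables (n_gt0 : (0 < n)%N) (k_gt0 : (0 < k)%N).

Local Notation bud := (k%:R / n%:R : R).
Local Notation yy := (n%:R / k%:R : R).
Local Notation sc c := ((#|supporters A c|)%:R : R).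

Lemma nR_gt0 : (0 : R) < n%:R. Proof. by rewrite ltr0n. Qed.
Lemma kR_gt0 : (0 : R) < k%:R. Proof. by rewrite ltr0n. Qed.

Lemma s_ge_y (b : 'I_n -> R) c rho : (forall i, b i <= bud) -> rho_ok A b c rho -> yy <= sc c.
Proof.
move=> hb [hr0 hsum].
have h1 : 1 <= bud * sc c.
  have : \sum_(i in supporters A c) Num.min (b i) rho <= \sum_(i in supporters A c) bud.
    by apply: ler_sum => i _; exact: le_trans (min_le1 _ _) (hb i).
  by rewrite sumr_const hsum mulr_natr.
have hn := nR_gt0; have hk := kR_gt0.
rewrite ler_pdivrMr //.
rewrite mulrC mulrA ler_pdivlMr // mul1r in h1.
Show. exact: h1.
Qed.


Lemma pay_eq (b : 'I_n -> R) c rho i :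
  mes_pay A b c rho i = b i - (if c \in A i then Num.min (b i) rho else 0).
Proof. by rewrite /mes_pay; case: (c \in A i); rewrite ?subr0. Qed.

Lemma sum_pay (b : 'I_n -> R) c rho : rho_ok A b c rho ->
  \sum_i mes_pay A b c rho i = \sum_i b i - 1.
Proof.
move=> [_ hs]; under eq_bigr => i _ do rewrite pay_eq.
rewrite sumrB; congr (_ - _); rewrite -hs.
rewrite [RHS]big_mkcond /=; apply: eq_bigr => i _.
by rewrite /supporters inE.
Qed.

Lemma basic W b : mes_reach A k W b ->
  [/\ forall i, 0 <= b i, forall i, b i <= bud,
      \sum_i b i = k%:R - #|W|%:R & forall c, c \in W -> yy <= sc c].
Proof.
have hn := nR_gt0; have hk := kR_gt0.
elim=> [|W0 b0 c rho hr [h0 h1 h2 h3] [hcW [hok hmin]]].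
  split=> //.
  - by move=> i; rewrite divr_ge0 // ltW.
  - by rewrite sumr_const card_ord cards0 subr0 -(mulr_natr (k%:R / n%:R)) divfK // gt_eqF.
  - by move=> c; rewrite inE.
have hr0 := hok.1.
split.
- move=> i; rewrite pay_eq; case: (c \in A i); last by rewrite subr0.
  by rewrite subr_ge0 min_le1.
- move=> i; rewrite pay_eq; apply: le_trans (h1 i); rewrite lerBlDr lerDl.
  by case: (c \in A i) => //; apply: min_ge.
- by rewrite sum_pay // h2 cardsU1 hcW /= natrD; lra.
- move=> c'; rewrite in_setU1 => /orP [/eqP -> | hc']; last exact: h3.
  exact: s_ge_y h1 hok.
Qed.


Lemma rho_ok_inv (b : 'I_n -> R) c0 : (0 < #|supporters A c0|)%N ->
  (forall j, j \in supporters A c0 -> (sc c0)^-1 <= b j) -> rho_ok A b c0 (sc c0)^-1.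
Proof.
move=> hx hall; split; first by rewrite invr_ge0 ler0n.
rewrite (eq_bigr (fun _ => (sc c0)^-1)); last by move=> j hj; rewrite min_r // hall.
by rewrite sumr_const -(mulr_natr (sc c0)^-1) mulVf // pnatr_eq0 -lt0n.
Qed.

Lemma inv_main c0 : forall W b, mes_reach A k W b -> c0 \notin W ->
  (0 < #|supporters A c0|)%N -> yy <= sc c0 ->
  forall i, i \in supporters A c0 ->
  yy * #|W|%:R + (sc c0 - yy) * Num.min (sc c0 * bud - 1) (sc c0 * (bud - b i))
    <= \sum_(c in W) Num.min (sc c) (sc c0).
Proof.
have hn := nR_gt0; have hk := kR_gt0.
set x := sc c0.
move=> W0 b0 hr; elim: hr => [|W b c rho hr IH hch] hc0 hx hyx.
  move=> i _; rewrite big_set0 cards0 mulr0 add0r subrr mulr0.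
  apply: mulr_ge0_le0; first by lra.
  exact: min_le2.
have hx0 : 0 < x by rewrite ltr0n.
have hxy0 : 0 <= x - yy by rewrite subr_ge0.
move: hc0; rewrite in_setU1 negb_or => /andP [hc0c hc0W].
move: (hr) => /basic [hb0 hb1 hbs hbW].
have {}IH := IH hc0W hx hyx.
have [hcW [hok hmin]] := hch.
have hrho0 := hok.1.
rewrite big_setU1 //= cardsU1 hcW /= natrD.
case: (boolP [forall j in supporters A c0, x^-1 <= b j]) => [/forall_inP hall | ].
  have hle : rho <= x^-1 by apply: hmin hc0W (rho_ok_inv hx hall).
  have hsc : x <= sc c.
    have [_ hs] := hok.
    have : 1 <= x^-1 * sc c.
      have : \sum_(i in supporters A c) Num.min (b i) rho <= \sum_(i in supporters A c) x^-1.
        by apply: ler_sum => i _; exact: le_trans (min_le2 _ _) hle.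
      by rewrite hs sumr_const -(mulr_natr x^-1).
    by rewrite ler_pdivlMl // mulr1.
  rewrite min_r //.
  move=> i hi.
  have hbi : b i - rho <= mes_pay A b c rho i.
    rewrite pay_eq; case: (c \in A i); last by lra.
    by rewrite lerD2l lerN2 min_le2.
  have hxr : x * rho <= 1 by rewrite -(mulfV (lt0r_neq0 hx0)); apply: ler_wpM2l; lra.
  have hm : Num.min (x * bud - 1) (x * (bud - mes_pay A b c rho i))
            <= Num.min (x * bud - 1) (x * (bud - b i)) + 1.
    have hb' : x * (bud - mes_pay A b c rho i) <= x * (bud - b i) + 1.
      have := ler_wpM2l (ltW hx0) hbi.
      rewrite !mulrBr; lra.
    move: hb'; set p := x * (bud - _); set q := x * (bud - _).
    by case: (lerP (x * bud - 1) p); case: (lerP (x * bud - 1) q) => *; lra.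
  have := IH i hi.
  have := ler_wpM2l hxy0 hm.
  set M1 := Num.min _ _; set M2 := Num.min _ _.
  rewrite mulrDr mulr1 => h1 h2.
  lra.
rewrite negb_forall_in => /exists_inP [j hj hbj].
have hbj' : b j < x^-1 by rewrite ltNge.
have hmj : Num.min (x * bud - 1) (x * (bud - b j)) = x * bud - 1.
  rewrite min_l //; rewrite mulrBr lerD2l lerN2.
  have : x * b j <= x * x^-1 by apply: ler_wpM2l; lra.
  by rewrite mulfV ?(lt0r_neq0 hx0).
have := IH j hj; rewrite hmj => h1.
have hmc : yy <= Num.min (sc c) x.
  by apply: min_ge => //; exact: s_ge_y hb1 hok.
move=> i hi.
have := ler_wpM2l hxy0 (min_le1 (x * bud - 1) (x * (bud - mes_pay A b c rho i))).
set M := Num.min _ _ => h2.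
lra.
Qed.


Lemma final_bound W (b : 'I_n -> R) c0 : mes_reach A k W b ->
  (forall c, c \notin W -> forall rho, ~ rho_ok A b c rho) ->
  c0 \notin W -> (0 < #|supporters A c0|)%N -> yy <= sc c0 ->
  yy * #|W|%:R + (sc c0 - yy) * (sc c0 * bud - 1)
    <= \sum_(c in W) Num.min (sc c) (sc c0).
Proof.
move=> hr hno hc0 hx hyx.
set x := sc c0.
have hx0 : 0 < x by rewrite ltr0n.
case: (boolP [forall j in supporters A c0, x^-1 <= b j]) => [/forall_inP hall | ].
  by case: (hno c0 hc0 _ (rho_ok_inv hx hall)).
rewrite negb_forall_in => /exists_inP [j hj hbj].
have hbj' : b j < x^-1 by rewrite ltNge.
have hmj : Num.min (x * bud - 1) (x * (bud - b j)) = x * bud - 1.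
  rewrite min_l //; rewrite mulrBr lerD2l lerN2.
  have : x * b j <= x * x^-1 by apply: ler_wpM2l; lra.
  by rewrite mulfV ?(lt0r_neq0 hx0).
by have := inv_main hr hc0 hx hyx hj; rewrite hmj.
Qed.

End MESProof.

Lemma alg (R : rcfType) (x y l K bud q : R) : 0 < y -> y <= x -> 0 <= l -> l <= K ->
  y * bud = 1 -> 0 < q -> q * q = K ->
  (2 / q - 2 / K) * l * x <= y * l + (x - y) * (x * bud - 1).
Proof.
move=> hy hyx hl hlK hb hq hK.
have hK0 : 0 < K by rewrite -hK mulr_gt0.
have hbud : bud = y^-1.
  by apply: (mulfI (lt0r_neq0 hy)); rewrite hb mulfV // lt0r_neq0.
set F := K * y ^+ 2 * l + K * (x - y) ^+ 2 - 2 * (q - 1) * l * x * y.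
have eF : K * F = l * (q * q) * ((q * y - x) ^+ 2 + y ^+ 2) + (K - l) * (q * q) * (x - y) ^+ 2.
  by rewrite /F -hK; ring.
have hF : 0 <= F.
  have : 0 <= K * F.
    rewrite eF; apply: addr_ge0; apply: mulr_ge0; try apply: mulr_ge0; try lra;
      try apply: addr_ge0; try apply: sqr_ge0; rewrite ?mulr_ge0 //; lra.
  by rewrite pmulr_rge0.
rewrite -subr_ge0.
have -> : y * l + (x - y) * (x * bud - 1) - (2 / q - 2 / K) * l * x = F / (y * K).
  rewrite /F hbud -hK; field.
  by rewrite !lt0r_neq0.
by rewrite divr_ge0 // mulr_ge0 // ltW.
Qed.


Lemma sub_card (T : finType) (S : {set T}) (m : nat) : (m <= #|S|)%N ->
  exists B : {set T}, B \subset S /\ #|B| = m.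
Proof.
elim: m => [|m IH] hm; first by exists set0; rewrite sub0set cards0.
have [B [hBS hB]] := IH (ltnW hm).
have : (0 < #|S :\: B|)%N by rewrite cardsD (setIidPr hBS) hB subn_gt0.
case/card_gt0P => z; rewrite inE => /andP [hzB hzS].
exists (z |: B); split; first by rewrite subUset sub1set hzS hBS.
by rewrite cardsU1 hzB hB.
Qed.

Lemma beta_bounds (R : rcfType) (q : R) : 1 <= q -> 0 <= 2 / q - 2 / (q * q) <= 1.
Proof.
move=> hq.
have hq0 : 0 < q by lra.
have -> : 2 / q - 2 / (q * q) = (2 * q - 2) / (q * q).
  by field; rewrite lt0r_neq0.
have hqq : 0 < q * q by rewrite mulr_gt0.
apply/andP; split; first by rewrite divr_ge0 //; lra.
rewrite ler_pdivrMr // mul1r.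
have : 0 <= (q - 1) * (q - 1) by rewrite mulr_ge0 //; lra.
lra.
Qed.

Theorem theorem4 (R : rcfType) (C : finType) (n : nat) (A : 'I_n -> {set C})
    (k : nat) (hk1 : (1 <= k)%N) (hkC : (k <= #|C|)%N)
    (hopt : (0 < opt_sw A k)%N)
    (W Wbar : {set C}) :
  mes_output R A k W -> av_completion A k W Wbar ->
  2 / Num.sqrt (k%:R : R) - 2 / k%:R <= util_ratio R A k Wbar.
Proof.
move=> [b [hr hno]] [T [hTW hTc hTopt ->]].
have n_gt0 : (0 < n)%N.
  rewrite lt0n; apply/negP => /eqP hn0; move: hopt.
  rewrite /opt_sw big1 // => W' _; rewrite /sw big1 // => i _.
  by case: i => m hm; exfalso; move: hm; rewrite hn0.
have k_gt0 : (0 < k)%N by [].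
have hn := nR_gt0 R n_gt0; have hk := kR_gt0 R k_gt0.
have [hb0 hb1 hbs hbW] := basic n_gt0 k_gt0 hr.
set l := #|W|.
have hlk : (l <= k)%N.
  rewrite -(ler_nat R); have : 0 <= \sum_i b i by apply: sumr_ge0 => i _.
  rewrite hbs; lra.
set q := Num.sqrt (k%:R : R).
have hq0 : 0 <= q by rewrite sqrtr_ge0.
have hqq : q * q = k%:R by rewrite -expr2 sqr_sqrtr // ler0n.
have hq1 : 1 <= q.
  have : (1 : R) <= k%:R by rewrite ler1n.
  rewrite -hqq => h; nra.
set beta := 2 / q - 2 / k%:R.
have /andP [hbe0 hbe1] : 0 <= beta <= 1 by rewrite /beta -hqq; exact: beta_bounds.
set xn := (\max_(c in ~: W) #|supporters A c|)%N.
have hxn : forall c, c \notin W -> (#|supporters A c| <= xn)%N.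
  by move=> c hc; apply: leq_bigmax_cond; rewrite inE.
set x := (xn%:R : R).
have hx0 : 0 <= x by rewrite ler0n.
have hkey : beta * l%:R * x <= \sum_(c in W) Num.min (#|supporters A c|%:R) x.
  case: (posnP xn) => [hx | hxpos].
    rewrite /x hx mulr0; apply: sumr_ge0 => c _; apply: min_ge => //.
  have hne : (0 < #|~: W|)%N.
    rewrite lt0n; apply/negP => /eqP h0; move: hxpos.
    by rewrite /xn big_pred0 // => c; rewrite (card0_eq h0).
  have [c0 hc0 hxc0] := eq_bigmax_cond (fun c => #|supporters A c|) hne.
  rewrite inE in hc0.
  have hxc : x = #|supporters A c0|%:R by rewrite /x -hxc0.
  have hc0p : (0 < #|supporters A c0|)%N by rewrite -hxc0.
  have hy0 : (0 : R) < n%:R / k%:R by rewrite divr_gt0.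
  case: (lerP (n%:R / k%:R) x) => hyx.
    have hfin := final_bound n_gt0 k_gt0 hr hno hc0 hc0p.
    rewrite -hxc in hfin; have {}hfin := hfin hyx.
    apply: le_trans hfin.
    apply: alg => //.
    - by rewrite ler_nat.
    - by rewrite mulrA mulfVK ?mulfV // lt0r_neq0.
    - by lra.
  rewrite (eq_bigr (fun _ => x)); last first.
    move=> c hc; rewrite min_r //; apply: ltW; apply: lt_le_trans hyx _.
    exact: hbW.
  rewrite sumr_const -(mulr_natr x).
  have hz : 0 <= l%:R * x by rewrite mulr_ge0.
  have := ler_wpM2r hz hbe1; rewrite mul1r mulrA; lra.
have [B0 [_ hB0]] : exists B : {set C}, B \subset [set: C] /\ #|B| = k.
  by apply: sub_card; rewrite cardsT.
have hPB0 : #|B0| == k by rewrite hB0.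
have hoptE := @bigop.bigmax_eq_arg _ B0 (fun W' : {set C} => #|W'| == k) (fun W' => sw A W') hPB0.
case: arg_maxnP hoptE => [|Ws hWs _ hoptE]; first exact: hPB0.
move/eqP: hWs => hWs.
have hopt' : opt_sw A k = sw A Ws by rewrite /opt_sw hoptE.
set j := #|Ws :&: W|.
set D := Ws :\: W.
have hjl : (j <= l)%N by rewrite /j /l subset_leq_card // subsetIr.
have hD : #|D| = (k - j)%N by rewrite /D cardsD hWs.
have [U [hUD hU]] : exists U : {set C}, U \subset D /\ #|U| = (k - l)%N.
  by apply: sub_card; rewrite hD; lia.
have hUW : U \subset ~: W.
  by apply: subset_trans hUD _; rewrite /D; apply/subsetP => z; rewrite !inE => /andP [->].
have hUT := hTopt U hUW hU.
have hDU : #|D :\: U| = (l - j)%N by rewrite cardsD (setIidPr hUD) hU hD; lia.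
have hDs : (\sum_(c in D) #|supporters A c| <= \sum_(c in T) #|supporters A c| + (l - j) * xn)%N.
  rewrite (big_setID U) /= (setIidPr hUD) leq_add //.
  rewrite -hDU -sum_nat_const; apply: leq_sum => c; rewrite /D !inE => /andP [_ /andP [hcW _]].
  exact: hxn.
have hoptS : sw A Ws = (\sum_(c in Ws :&: W) #|supporters A c| + \sum_(c in D) #|supporters A c|)%N.
  by rewrite sw_sum (big_setID W).
have hTW' : W :&: T = set0.
  apply/setP => z; rewrite !inE; apply/negP => /andP [hzW hzT].
  by move/subsetP: hTW => /(_ z hzT); rewrite inE hzW.
have hbarS : sw A (W :|: T) = (\sum_(c in W) #|supporters A c| + \sum_(c in T) #|supporters A c|)%N.
  rewrite sw_sum (big_setID W) /=; congr (_ + _)%N.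
    by apply: eq_bigl => z; rewrite !inE; case: (z \in W); rewrite ?andbT ?andbF.
  apply: eq_bigl => z; rewrite !inE; case hz: (z \in W); case hzT: (z \in T) => //=.
  by move: hTW' => /setP /(_ z); rewrite !inE hz hzT.
have hWsplit : forall F : C -> R, \sum_(c in W) F c = \sum_(c in Ws :&: W) F c + \sum_(c in W :\: Ws) F c.
  by move=> F; rewrite (big_setID Ws) /= setIC.
move: hopt; rewrite hopt' hoptS => hopt.
rewrite /util_ratio hbarS hopt' hoptS ler_pdivlMr ?ltr0n //.
rewrite !natrD !natr_sum.
move: hkey; rewrite hWsplit hWsplit => hkey.
set a := \sum_(c in Ws :&: W) (#|supporters A c|)%:R.
set d := \sum_(c in D) (#|supporters A c|)%:R.
set t := \sum_(c in T) (#|supporters A c|)%:R.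
set bO := \sum_(c in W :\: Ws) (#|supporters A c|)%:R.
set mI := \sum_(c in Ws :&: W) Num.min (#|supporters A c|)%:R x in hkey.
set mO := \sum_(c in W :\: Ws) Num.min (#|supporters A c|)%:R x in hkey.
have hmO : mO <= bO by apply: ler_sum => c _; exact: min_le1.
have hmI : mI <= (1 - beta) * a + beta * x * j%:R.
  have : mI <= \sum_(c in Ws :&: W) ((1 - beta) * (#|supporters A c|)%:R + beta * x).
    apply: ler_sum => c _ /=.
    have hs0 : (0 : R) <= (#|supporters A c|)%:R by rewrite ler0n.
    have hb1' : 0 <= 1 - beta by lra.
    case: (lerP (#|supporters A c|)%:R x) => hsx.
      have := ler_wpM2l hbe0 hsx; lra.
    have := ler_wpM2l hb1' (ltW hsx); lra.
  by rewrite big_split /= -mulr_sumr sumr_const -(mulr_natr (beta * x)).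
have hd : d <= t + (l%:R - j%:R) * x.
  have := hDs; rewrite -(ler_nat R) natrD natrM !natr_sum natrB //.
have ht0 : 0 <= t by apply: sumr_ge0 => c _; rewrite ler0n.
have h1 : beta * d <= beta * (t + (l%:R - j%:R) * x) by apply: ler_wpM2l.
have h2 : beta * t <= t by have := ler_wpM2r ht0 hbe1; rewrite mul1r.
lra.
Qed.
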